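(* Let $a>0$ and let $\epsilon>0$ be sufficiently small. The regularized system $$\dot x=1,\qquad \epsilon\dot v=-a\epsilon v-\sin\!\left(\pi x\left[1+\tfrac12\psi(v)\right]\right)$$ does not possess periodic solutions (i.e. there is no solution with $v(x+T)=v(x)$ for all $x$, for some $T>0$).
   Context: $\psi:\mathbb{R}\to\mathbb{R}$ is a transition function: $C^1$ on $\mathbb{R}$ and $C^2$ on $[-1,1]$, with $\psi(v)=\operatorname{sign}(v)$ for $|v|\ge1$, $\psi'(v)>0$ for $|v|<1$, and $\operatorname{sign}\psi''(v)=-\operatorname{sign}(v)$ at $|v|=1$. *)

(* Defs.v *)
From Stdlib Require Import Reals.
From Coquelicot Require Import Coquelicot.
Open Scope R_scope.

Definition C1_on_R (f : R -> R) : Prop :=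
  (forall x, ex_derive f x) /\ (forall x, continuous (Derive f) x).

Definition is_derive_on_cc (g g2 : R -> R) (a b : R) : Prop :=
  forall x, a <= x <= b ->
    filterlim (fun y => (g y - g x) / (y - x))
      (within (fun y => a <= y <= b /\ y <> x) (locally x))
      (locally (g2 x)).

Definition continuous_on_cc (h : R -> R) (a b : R) : Prop :=
  forall x, a <= x <= b ->
    filterlim h (within (fun y => a <= y <= b) (locally x)) (locally (h x)).

(* Transition function psi: C^1 on R, C^2 on [-1,1] (psi'' denoted psi2,
   one-sided at +-1), psi = sign outside (-1,1), psi' > 0 on (-1,1),
   sign psi''(v) = - sign v at |v| = 1, i.e. psi''(1) < 0 < psi''(-1). *)
Definition transition_function (psi : R -> R) : Prop :=
  C1_on_R psi /\
  (exists psi2 : R -> R,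
      is_derive_on_cc (Derive psi) psi2 (-1) 1 /\
      continuous_on_cc psi2 (-1) 1 /\
      psi2 1 < 0 /\ 0 < psi2 (-1)) /\
  (forall v, 1 <= v -> psi v = 1) /\
  (forall v, v <= -1 -> psi v = -1) /\
  (forall v, -1 < v < 1 -> 0 < Derive psi v).

(* v : R -> R (as a function of x = t + const, since xdot = 1) solves
   eps v' = - a eps v - sin(pi x (1 + psi(v)/2)) on all of R. *)
Definition reg_solution (psi : R -> R) (a eps : R) (v : R -> R) : Prop :=
  forall x, ex_derive v x /\
    eps * Derive v x = - a * eps * v x - sin (PI * x * (1 + psi (v x) / 2)).

Definition periodic_solution (psi : R -> R) (a eps : R) (v : R -> R) : Prop :=
  reg_solution psi a eps v /\
  exists T, 0 < T /\ forall x, v (x + T) = v x.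

(* Main.v *)
Require Import Defs.
From Stdlib Require Import Reals Lra.
From Coquelicot Require Import Coquelicot.
Open Scope R_scope.

Lemma mvt_open (f df : R -> R) a b : a < b ->
  (forall x, is_derive f x (df x)) ->
  exists c, a < c < b /\ f b - f a = df c * (b - a).
Proof.
  intros Hab Hd. destruct (MVT_cor2 f df a b Hab) as [c [H1 H2]].
  - intros c _. apply is_derive_Reals, Hd.
  - exists c; split; assumption.
Qed.

Lemma const_of_d0 (f : R -> R) : (forall x, is_derive f x 0) -> forall x, f x = f 0.
Proof.
  intros Hd x. destruct (Rtotal_order x 0) as [H|[H|H]].
  - destruct (mvt_open f (fun _ => 0) x 0 H Hd) as [c [_ Hc]]. lra.
  - subst; reflexivity.
  - destruct (mvt_open f (fun _ => 0) 0 x H Hd) as [c [_ Hc]]. lra.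
Qed.

Lemma shift_derive (v : R -> R) d x : (forall y, ex_derive v y) ->
  is_derive (fun y => v (y + d)) x (Derive v (x + d)).
Proof.
  intros He.
  assert (H := is_derive_comp v (fun y => y + d) x (Derive v (x + d)) 1
     (Derive_correct _ _ (He (x + d)))).
  assert (Hg : is_derive (fun y : R => y + d) x 1).
  { apply is_derive_Reals. replace 1 with (1 + 0) by ring.
    apply derivable_pt_lim_plus. apply derivable_pt_lim_id. apply derivable_pt_lim_const. }
  specialize (H Hg). unfold scal in H; simpl in H; unfold mult in H; simpl in H.
  replace (Derive v (x + d)) with (1 * Derive v (x + d)) by ring. exact H.
Qed.

Lemma psi_strict psi : transition_function psi ->
  forall s t, -1 <= s -> s < t -> t <= 1 -> psi s < psi t.
Proof.
  intros [[Hpd Hpc] [_ [Hp1 [Hpm1 Hpd']]]] s t H1 H2 H3.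
  destruct (mvt_open psi (Derive psi) s t H2 (fun x => Derive_correct _ _ (Hpd x)))
    as [c [Hc Heq]].
  assert (0 < Derive psi c) by (apply Hpd'; lra).
  assert (0 < Derive psi c * (t - s)) by (apply Rmult_lt_0_compat; lra). lra.
Qed.

Lemma psi_range psi : transition_function psi ->
  forall y, -1 < y < 1 -> -1 < psi y < 1.
Proof.
  intros Ht y Hy.
  pose proof (psi_strict psi Ht (-1) y ltac:(lra) ltac:(lra) ltac:(lra)).
  pose proof (psi_strict psi Ht y 1 ltac:(lra) ltac:(lra) ltac:(lra)).
  destruct Ht as [_ [_ [Hp1 [Hpm1 _]]]].
  rewrite (Hp1 1) in H0 by lra. rewrite (Hpm1 (-1)) in H by lra. lra.
Qed.

Lemma sin_alg al be : sin al = sin (al + be) -> sin al = sin (al + be + be) -> sin be = 0.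
Proof.
  intros H1 H2. rewrite sin_plus in H1. rewrite !sin_plus, !cos_plus in H2.
  pose proof (sin2_cos2 al) as Ea. pose proof (sin2_cos2 be) as Eb.
  unfold Rsqr in *.
  set (s := sin al) in *. set (co := cos al) in *. set (sb := sin be) in *.
  set (cb := cos be) in *.
  assert (E1 : co * sb = s * (1 - cb)) by lra.
  assert (E2 : s * (cb - 1) = 0).
  { assert (H2' : s = (s * cb + co * sb) * cb + (co * cb - s * sb) * sb) by lra.
    assert (H3 : (co * cb - s * sb) * sb = cb * (co * sb) - s * (sb * sb)) by ring.
    rewrite H3, E1 in H2'.
    assert (H4 : sb * sb = 1 - cb * cb) by lra. rewrite H4 in H2'.
    nra. }
  destruct (Rmult_integral _ _ E2) as [Hs|Hc].
  - rewrite Hs in E1. assert (co * co = 1) by nra.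
    assert (co * (co * sb) = 0) by (rewrite E1; ring). nra.
  - nra.
Qed.

Lemma u_trick (v : R -> R) a eps T c :
  0 < a -> 0 < eps -> 0 < T -> c <> 0 ->
  (forall x, ex_derive v x) ->
  (forall x, eps * Derive v x = - a * eps * v x - sin (c * x)) ->
  (forall x, v (x + T) = v x) ->
  exists xi, v xi + v (xi + PI / c) = 0.
Proof.
  intros Ha He HT Hc Hex Hs Hp.
  set (d := PI / c).
  set (u := fun x => v x + v (x + d)).
  assert (Hd : forall x, is_derive u x (Derive v x + Derive v (x + d))).
  { intros x. unfold u.
    apply (is_derive_plus v (fun y => v (y + d))).
    - apply Derive_correct, Hex.
    - apply shift_derive, Hex. }
  destruct (mvt_open u _ 0 T HT Hd) as [xi [Hxi Heq]].
  assert (HuT : u T = u 0).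
  { unfold u. rewrite Rplus_0_l. rewrite <- (Hp 0), Rplus_0_l.
    replace (T + d) with (d + T) by ring. rewrite Hp. reflexivity. }
  assert (H0 : Derive v xi + Derive v (xi + d) = 0).
  { rewrite HuT in Heq. replace (T - 0) with T in Heq by ring.
    assert (Heq' : (Derive v xi + Derive v (xi + d)) * T = 0) by lra.
    destruct (Rmult_integral _ _ Heq'); lra. }
  exists xi.
  assert (Hsin : sin (c * (xi + d)) = - sin (c * xi)).
  { replace (c * (xi + d)) with (c * xi + PI) by (unfold d; field; exact Hc).
    apply neg_sin. }
  pose proof (Hs xi) as A. pose proof (Hs (xi + d)) as B. rewrite Hsin in B.
  assert (E : a * eps * (v xi + v (xi + d)) = 0).
  { replace (a * eps * (v xi + v (xi + d))) with
      (- (eps * Derive v xi + eps * Derive v (xi + d))) by (rewrite A, B; ring).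
    replace (eps * Derive v xi + eps * Derive v (xi + d)) with
      (eps * (Derive v xi + Derive v (xi + d))) by ring.
    rewrite H0; ring. }
  destruct (Rmult_integral _ _ E) as [E1|E1]; [|exact E1].
  exfalso. assert (0 < a * eps) by (apply Rmult_lt_0_compat; lra). lra.
Qed.

Theorem theorem7 (psi : R -> R) (a : R) :
  transition_function psi -> 0 < a ->
  exists eps0, 0 < eps0 /\
    forall eps, 0 < eps < eps0 ->
      ~ exists v : R -> R, periodic_solution psi a eps v.
Proof.
  intros Htf Ha. exists 1. split; [lra|].
  intros eps Heps [v [Hsol [T [HT Hper]]]].
  pose proof Htf as [[Hpd Hpc] [_ [Hp1 [Hpm1 Hpd']]]].
  assert (Hex : forall x, ex_derive v x) by (intros x; apply (Hsol x)).
  assert (Hdper : forall x, Derive v (x + T) = Derive v x).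
  { intros x. symmetry. apply is_derive_unique.
    apply (is_derive_ext (fun y => v (y + T))). { intros t; apply Hper. }
    apply shift_derive, Hex. }
  assert (HF : forall x, sin (PI * (x + T) * (1 + psi (v x) / 2)) =
                         sin (PI * x * (1 + psi (v x) / 2))).
  { intros x. destruct (Hsol x) as [_ E1]. destruct (Hsol (x + T)) as [_ E2].
    rewrite Hdper, Hper in E2. lra. }
  assert (Hsb : forall x, sin (PI * T * (1 + psi (v x) / 2)) = 0).
  { intros x. set (k := 1 + psi (v x) / 2).
    apply (sin_alg (PI * x * k)).
    - pose proof (HF x) as H1. fold k in H1. rewrite <- H1. f_equal. ring.
    - pose proof (HF x) as H1. fold k in H1.
      pose proof (HF (x + T)) as H2. rewrite Hper in H2. fold k in H2.
      transitivity (sin (PI * (x + T) * k)). { symmetry; exact H1. }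
      transitivity (sin (PI * (x + T + T) * k)). { symmetry; exact H2. }
      f_equal; ring. }
  set (th := fun x => PI * T * (1 + psi (v x) / 2)).
  assert (Hth : forall x, is_derive th x (PI * T * (Derive v x * Derive psi (v x) / 2))).
  { intros x. unfold th.
    assert (Hc := is_derive_comp psi v x _ _ (Derive_correct _ _ (Hpd (v x)))
                     (Derive_correct _ _ (Hex x))).
    unfold scal in Hc; simpl in Hc; unfold mult in Hc; simpl in Hc.
    apply is_derive_scal.
    assert (H1 : is_derive (fun y => /2 * psi (v y)) x (/2 * (Derive v x * Derive psi (v x))))
      by (apply is_derive_scal; exact Hc).
    assert (H3 := is_derive_plus _ _ x _ _ (is_derive_const (1:R) x) H1).
    simpl in H3. unfold plus, zero in H3; simpl in H3.
    apply (is_derive_ext (fun t => Rplus 1 (/ 2 * psi (v t)))).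
    { intros t. unfold Rdiv. rewrite (Rmult_comm (psi (v t))). reflexivity. }
    replace (Derive v x * Derive psi (v x) / 2) with (0 + / 2 * (Derive v x * Derive psi (v x))).
    - exact H3.
    - unfold Rdiv. ring. }
  assert (Hth0 : forall x, is_derive th x 0).
  { intros x. pose proof (Hth x) as H.
    assert (Hs := is_derive_comp sin th x _ _ (proj2 (is_derive_Reals _ _ _) (derivable_pt_lim_sin (th x))) H).
    unfold scal in Hs; simpl in Hs; unfold mult in Hs; simpl in Hs.
    assert (Hz : is_derive (fun y => sin (th y)) x 0).
    { apply (is_derive_ext (fun _ => 0)). { intros t. unfold th. symmetry. apply Hsb. }
      exact (is_derive_const (V := R_NormedModule) (0:R) x). }
    apply is_derive_unique in Hs. apply is_derive_unique in Hz.
    assert (Hs2 : PI * T * (Derive v x * Derive psi (v x) / 2) * cos (th x) = 0)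
      by (rewrite <- Hs, <- Hz; reflexivity). clear Hs; rename Hs2 into Hs.
    pose proof (sin2_cos2 (th x)) as E. unfold th in E at 1. rewrite Hsb in E.
    unfold Rsqr in E.
    assert (Hd : PI * T * (Derive v x * Derive psi (v x) / 2) = 0).
    { assert (Hsq : cos (th x) * cos (th x) = 1) by lra.
      set (D := PI * T * (Derive v x * Derive psi (v x) / 2)) in *.
      assert (D = (D * cos (th x)) * cos (th x)) by (rewrite Rmult_assoc, Hsq; ring).
      rewrite Hs in H0. lra. }
    rewrite Hd in H. exact H. }
  assert (Hpc0 : forall x, psi (v x) = psi (v 0)).
  { intros x. pose proof (const_of_d0 th Hth0 x) as E. unfold th in E.
    assert (0 < PI * T) by (apply Rmult_lt_0_compat; [apply PI_RGT_0|lra]).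
    apply (Rmult_eq_reg_l (PI * T)) in E; [lra|lra]. }
  set (p := psi (v 0)) in *.
  set (c := PI * (1 + p / 2)).
  assert (Hs' : forall x, eps * Derive v x = - a * eps * v x - sin (c * x)).
  { intros x. destruct (Hsol x) as [_ E]. rewrite Hpc0 in E. rewrite E.
    replace (c * x) with (PI * x * (1 + p / 2)) by (unfold c; ring). reflexivity. }
  assert (HPI := PI_RGT_0).
  destruct (Rle_lt_dec 1 (v 0)) as [H0|H0];
  [| destruct (Rle_lt_dec (v 0) (-1)) as [H1|H1]].
  -
    assert (Hp : p = 1) by (apply Hp1; exact H0).
    assert (Hge : forall x, 1 <= v x).
    { intros x. destruct (Rle_lt_dec 1 (v x)) as [h|h]; [exact h|exfalso].
      destruct (Rle_lt_dec (v x) (-1)) as [h'|h'].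
      - pose proof (Hpm1 _ h'). pose proof (Hpc0 x). lra.
      - pose proof (psi_range psi Htf (v x) (conj h' h)). pose proof (Hpc0 x). lra. }
    destruct (u_trick v a eps T c Ha ltac:(lra) HT ltac:(unfold c; rewrite Hp; nra) Hex Hs' Hper)
      as [xi Hxi].
    pose proof (Hge xi). pose proof (Hge (xi + PI / c)). lra.
  - assert (Hp : p = -1) by (apply Hpm1; exact H1).
    assert (Hge : forall x, v x <= -1).
    { intros x. destruct (Rle_lt_dec (v x) (-1)) as [h|h]; [exact h|exfalso].
      destruct (Rle_lt_dec 1 (v x)) as [h'|h'].
      - pose proof (Hp1 _ h'). pose proof (Hpc0 x). lra.
      - pose proof (psi_range psi Htf (v x) (conj h h')). pose proof (Hpc0 x). lra. }
    destruct (u_trick v a eps T c Ha ltac:(lra) HT ltac:(unfold c; rewrite Hp; nra) Hex Hs' Hper)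
      as [xi Hxi].
    pose proof (Hge xi). pose proof (Hge (xi + PI / c)). lra.
  - assert (Hpr : -1 < p < 1) by (apply psi_range; auto; lra).
    assert (Hcp : 0 < c) by (unfold c; nra).
    assert (Hin : forall x, v x = v 0).
    { intros x. destruct (Rle_lt_dec 1 (v x)) as [h|h].
      { pose proof (Hp1 _ h). pose proof (Hpc0 x). lra. }
      destruct (Rle_lt_dec (v x) (-1)) as [h'|h'].
      { pose proof (Hpm1 _ h'). pose proof (Hpc0 x). lra. }
      destruct (Rtotal_order (v x) (v 0)) as [l|[l|l]]; [exfalso| exact l | exfalso].
      - pose proof (psi_strict psi Htf (v x) (v 0) ltac:(lra) l ltac:(lra)).
        pose proof (Hpc0 x). unfold p in *. lra.
      - pose proof (psi_strict psi Htf (v 0) (v x) ltac:(lra) l ltac:(lra)).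
        pose proof (Hpc0 x). unfold p in *. lra. }
    assert (HD : forall x, Derive v x = 0).
    { intros x. rewrite (Derive_ext v (fun _ => v 0)) by exact Hin. apply Derive_const. }
    pose proof (Hs' 0) as E0. pose proof (Hs' (PI / (2 * c))) as E1.
    rewrite HD in E0, E1. replace (c * 0) with 0 in E0 by ring. rewrite sin_0 in E0.
    replace (c * (PI / (2 * c))) with (PI / 2) in E1 by (field; lra).
    rewrite sin_PI2, (Hin (PI / (2 * c))) in E1. lra.
Qed.
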